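(* If there exists a $(G,[k_1,\dots,k_t],\lambda)$ Hadamard partitioned difference family and $G$ has a subgroup of index $2$, then the Diophantine system $$x_1+\cdots+x_t=\lambda,\qquad 2x_1(k_1-x_1)+\cdots+2x_t(k_t-x_t)=\lambda^2$$ has an integer solution $(s_1,\dots,s_t)$ with $0\le s_i\le k_i$ for each $i$.
   Context: $G$ is a finite group written additively, with difference $x-y:=x+(-y)$. For $B\subseteq G$, $\Delta B$ is the multiset $\{x-y: x,y\in B, x\neq y\}$; for $\mathcal{F}=\{B_1,\dots,B_t\}$, $\Delta\mathcal{F}$ is the multiset union of the $\Delta B_i$. $\mathcal{F}$ is a $(G,[k_1,\dots,k_t],\lambda)$ partitioned difference family if the $B_i$ partition $G$, $|B_i|=k_i$, and $\Delta\mathcal{F}$ contains every non-zero element of $G$ exactly $\lambda$ times; it is Hadamard if $|G|=2\lambda$. *)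

(* Defs.v *)
From mathcomp Require Import all_boot all_fingroup.
Set Implicit Arguments. Unset Strict Implicit. Unset Printing Implicit Defensive.
Local Open Scope group_scope.

(* The group G is a finite group; the paper writes it additively, with
   x - y := x + (-y).  In MathComp's multiplicative notation this is x * y^-1. *)

Definition diff_count (gT : finGroupType) (B : {set gT}) (g : gT) : nat :=
  #|[set p in setX B B | (p.1 != p.2) && (p.1 * p.2^-1 == g)]|.

Definition is_PDF (gT : finGroupType) (G : {set gT}) (t : nat)
    (B : 'I_t -> {set gT}) (k : 'I_t -> nat) (lam : nat) : Prop :=
  [/\ forall i j : 'I_t, i != j -> [disjoint B i & B j],
      \bigcup_(i < t) B i = G,
      forall i : 'I_t, #|B i| = k i &
      forall g : gT, g \in G -> g != 1 -> (\sum_(i < t) diff_count (B i) g = lam)%N].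

Definition is_Hadamard_PDF (gT : finGroupType) (G : {set gT}) (t : nat)
    (B : 'I_t -> {set gT}) (k : 'I_t -> nat) (lam : nat) : Prop :=
  is_PDF G B k lam /\ #|G| = (2 * lam)%N.

(* Main.v *)
Require Import Defs.
From mathcomp Require Import all_boot all_fingroup.
From mathcomp Require Import zify.

Lemma cnt (T : finType) (A : {set T}) (P : pred T) :
  \sum_(x in A) (P x : nat) = #|[set x | (x \in A) && P x]|.
Proof.
rewrite -sum1dep_card [RHS]big_mkcondr /=.
by apply: eq_bigr => x _; case: (P x).
Qed.

Lemma dc_sum (gT : finGroupType) (B : {set gT}) (g : gT) :
  diff_count B g = \sum_(x in B) \sum_(y in B) ((x != y) && ((x * y^-1)%g == g)).
Proof.
rewrite /diff_count -sum1dep_card pair_big /= big_mkcondr /=.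
apply: eq_big => [p|p _]; first by rewrite inE.
by case: ifP.
Qed.

Lemma sum_eq_ind (T : finType) (A : {set T}) (b : bool) (f : T) :
  \sum_(g in A) (b && (f == g) : nat) = b && (f \in A).
Proof.
case: (boolP (f \in A)) => fA.
  rewrite (bigD1 f) //= eqxx andbT big1 ?addn0 // => g /andP[_].
  by rewrite eq_sym => /negbTE ->; rewrite andbF.
rewrite andbF big1 // => g gA.
have -> : (f == g) = false by apply/negbTE; apply: contra fA => /eqP ->.
by rewrite andbF.
Qed.

Theorem corollary5p2 (gT : finGroupType) (G : {group gT}) (t : nat)
    (k : 'I_t -> nat) (lam : nat) :
  (exists B : 'I_t -> {set gT}, is_Hadamard_PDF G B k lam) ->
  (exists H : {group gT}, H \subset G /\ #|G : H|%g = 2) ->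
  exists s : 'I_t -> nat,
    [/\ forall i, s i <= k i,
        \sum_(i < t) s i = lam &
        \sum_(i < t) 2 * s i * (k i - s i) = lam ^ 2].
Proof.
move=> [B [[Hdisj Hcup Hcard Hdiff] HG]] [H [sHG iH]].
have HH : #|H| = lam.
  have := Lagrange sHG; rewrite iH HG; lia.
have HGH : #|G :\: H| = lam.
  by rewrite cardsD (setIidPr sHG) HG HH; lia.
have Bsub i : B i \subset G by rewrite -Hcup; exact: (bigcup_sup i).
have key g : g \in G -> \sum_(i < t) (g \in B i : nat) = 1.
  rewrite -Hcup => /bigcupP [i _ gi].
  rewrite (bigD1 i) //= gi big1 // => j ji.
  case: (boolP (g \in B j)) => // gj.
  by move/pred0P/(_ g): (Hdisj j i ji); rewrite /= gj gi.
have cI i : #|B i :&: H| = #|[set x | (x \in H) && (x \in B i)]|.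
  by apply: eq_card => x; rewrite !inE andbC.
exists (fun i => #|B i :&: H|); split.
- by move=> i; rewrite -Hcard; apply: subset_leq_card; apply: subsetIl.
- under eq_bigr => i _ do rewrite cI -cnt.
  rewrite exchange_big /= -HH -sum1_card.
  by apply: eq_bigr => g gH; apply: key; apply: (subsetP sHG).
have -> : lam ^ 2 = \sum_(g in G :\: H) \sum_(i < t) diff_count (B i) g.
  transitivity (\sum_(g in G :\: H) lam); first by rewrite sum_nat_const HGH; lia.
  apply: eq_bigr => g; rewrite inE => /andP [gnH gG].
  rewrite Hdiff //.
  by apply: contraNneq gnH => ->; apply: group1.
rewrite exchange_big /=; apply: eq_bigr => i _.
have sB := Bsub i.
under eq_bigr => g _ do rewrite dc_sum.
rewrite exchange_big /=.
under eq_bigr => x _ do rewrite exchange_big /=.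
have E x y : x \in G -> y \in G ->
   \sum_(g in G :\: H) ((x != y) && ((x * y^-1)%g == g) : nat)
   = (x \in H) * (y \notin H) + (x \notin H) * (y \in H).
  move=> xG yG; have xyG : (x * y^-1)%g \in G by rewrite groupM ?groupV.
  rewrite sum_eq_ind !inE xyG andbT.
  case: (boolP (x \in H)) => xH; case: (boolP (y \in H)) => yH //=.
  - by rewrite groupM ?groupV // andbF.
  - rewrite groupMl // groupV yH andbT.
    by case: eqP => // exy; move: yH; rewrite -exy xH.
  - rewrite groupMr ?groupV // xH andbT.
    by case: eqP => // exy; move: yH; rewrite -exy (negbTE xH).
  - have := rcoset_index2 sHG iH (_ : y \in G :\: H).
    rewrite !inE yH yG => /(_ isT) => Hy.
    have : x \in (H :* y)%g by rewrite Hy !inE xH xG.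
    by rewrite mem_rcoset => ->; rewrite andbF.
rewrite (eq_bigr (fun x => \sum_(y in B i) ((x \in H) * (y \notin H) + (x \notin H) * (y \in H)))); last first.
  move=> x xB; apply: eq_bigr => y yB.
  by apply: E; apply: (subsetP sB).
under eq_bigr => x _ do rewrite big_split /= -!big_distrr /=.
rewrite big_split /= -!big_distrl /=.
rewrite !cnt.
have -> : #|[set x | (x \in B i) && (x \in H)]| = #|B i :&: H|.
  by apply: eq_card => x; rewrite !inE.
have -> : #|[set x | (x \in B i) && (x \notin H)]| = k i - #|B i :&: H|.
  rewrite -Hcard -(cardsID H (B i)) addKn.
  by apply: eq_card => x; rewrite !inE andbC.
lia.
Qed.
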